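(* Let $R$ be a semisimple 2-primal ring. Then $R$ satisfies the complete radical formula if and only if $R$ satisfies the radical formula.
   Context: Rings are associative with identity; modules are unital left modules. $R$ is semisimple if ${}_RR$ is a direct sum of simple submodules; 2-primal if its set of nilpotent elements equals its prime radical. For an $R$-module $M$: a submodule $P$ is prime if $RM\not\subseteq P$ and for every ideal $A$ of $R$ and submodule $K$ with $AK\subseteq P$, $K\subseteq P$ or $AM\subseteq P$; completely prime if $RM\not\subseteq P$ and $rm\in P$ implies $m\in P$ or $rM\subseteq P$. $\beta^s(N)$ (resp. $\beta^s_{co}(N)$) is the intersection of all prime (resp. completely prime) submodules containing $N$ ($=M$ if none). $E_M(N)=\{rm: r^km\in N\text{ for some }k\in\mathbb N\}$, $\langle E_M(N)\rangle$ the submodule generated. $R$ satisfies the radical formula (resp. complete radical formula) if for every $R$-module $M$ and every submodule $N$, $\langle E_M(N)\rangle=\beta^s(N)$ (resp. $=\beta^s_{co}(N)$). *)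

(* Defs.v *)
(* Rings: R : pzRingType (associative, with identity, possibly
   the zero ring); modules: M : lmodType R (unital left R-modules).
   Subsets are Prop-valued predicates. *)
From mathcomp Require Import all_boot all_algebra.
Set Implicit Arguments. Unset Strict Implicit. Unset Printing Implicit Defensive.
Import GRing.Theory.
Local Open Scope ring_scope.

Definition pset (T : Type) := T -> Prop.
Definition psubset (T : Type) (A B : pset T) := forall x, A x -> B x.

Section Defs.
Variable R : pzRingType.

Section Mod.
Variable M : lmodType R.

Definition is_submodule (N : pset M) : Prop :=
  [/\ N 0, (forall x y, N x -> N y -> N (x + y))
    & (forall (r : R) x, N x -> N (r *: x))].

Definition span (S : pset M) : pset M :=
  fun m => forall N, is_submodule N -> psubset S N -> N m.

Definition prodIM (A : pset R) (K : pset M) : pset M :=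
  span (fun m => exists a k, [/\ A a, K k & m = a *: k]).

Definition fullM : pset M := fun _ => True.
End Mod.

Definition is_ideal (I : pset R) : Prop :=
  [/\ I 0, (forall x y, I x -> I y -> I (x + y))
    & (forall r x, I x -> I (r * x) /\ I (x * r))].

Definition fullR : pset R := fun _ => True.

Section Mod2.
Variable M : lmodType R.

Definition prime_submodule (P : pset M) : Prop :=
  [/\ is_submodule P,
      ~ psubset (prodIM fullR (@fullM M)) P
    & forall (A : pset R) (K : pset M), is_ideal A -> is_submodule K ->
        psubset (prodIM A K) P -> psubset K P \/ psubset (prodIM A (@fullM M)) P].

Definition completely_prime_submodule (P : pset M) : Prop :=
  [/\ is_submodule P,
      ~ psubset (prodIM fullR (@fullM M)) P
    & forall (r : R) (m : M), P (r *: m) ->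
        P m \/ psubset (fun x => exists m', x = r *: m') P].

(* beta^s(N) and beta^s_co(N); an empty intersection is M *)
Definition beta_s (N : pset M) : pset M :=
  fun m => forall P, prime_submodule P -> psubset N P -> P m.
Definition beta_s_co (N : pset M) : pset M :=
  fun m => forall P, completely_prime_submodule P -> psubset N P -> P m.

(* E_M(N) = { r m : r^k m \in N for some k in N } (k >= 1) *)
Definition E_M (N : pset M) : pset M :=
  fun x => exists (r : R) (m : M) (k : nat), x = r *: m /\ N (r ^+ k.+1 *: m).
End Mod2.

Definition radical_formula : Prop :=
  forall (M : lmodType R) (N : pset M), is_submodule N ->
    span (E_M N) = beta_s N.

Definition complete_radical_formula : Prop :=
  forall (M : lmodType R) (N : pset M), is_submodule N ->
    span (E_M N) = beta_s_co N.

Definition regularR : lmodType R := R^o.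

Definition simple_left_ideal (L : pset R) : Prop :=
  [/\ @is_submodule regularR L, exists x, L x /\ x <> 0
    & forall L' : pset R, @is_submodule regularR L' -> psubset L' L ->
        (forall x, L' x -> x = 0) \/ psubset L L'].

(* R is semisimple: _R R is an (internal) direct sum of simple submodules *)
Definition semisimple_ring : Prop :=
  exists (I : Type) (L : I -> pset R),
    [/\ forall i, simple_left_ideal (L i),
        (forall x : R, @span regularR (fun y => exists i, L i y) x)
      & forall i x, L i x ->
          @span regularR (fun y => exists j, j <> i /\ L j y) x -> x = 0].

Definition nilpotentR (x : R) : Prop := exists n : nat, x ^+ n = 0.

Definition prime_ideal (P : pset R) : Prop :=
  [/\ is_ideal P, ~ psubset fullR P
    & forall A B, is_ideal A -> is_ideal B ->
        (forall a b, A a -> B b -> P (a * b)) -> psubset A P \/ psubset B P].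

Definition prime_radical : pset R :=
  fun x => forall P, prime_ideal P -> P x.

Definition two_primal : Prop := forall x : R, nilpotentR x <-> prime_radical x.

End Defs.

(* Main.v *)
Require Import Defs.
From mathcomp Require Import all_boot all_algebra.
From Stdlib Require Import Classical FunctionalExtensionality PropExtensionality.
Require Import Defs.
Set Implicit Arguments. Unset Strict Implicit. Unset Printing Implicit Defensive.
Import GRing.Theory.
Local Open Scope ring_scope.

Lemma span_sub (R : pzRingType) (M : lmodType R) (S N : pset M) :
  is_submodule N -> psubset S N -> psubset (span S) N.
Proof. by move=> HN HS x Hx; apply: Hx. Qed.

Lemma span_gen (R : pzRingType) (M : lmodType R) (S : pset M) x :
  S x -> span S x.
Proof. by move=> Sx N _ HS; apply: HS. Qed.

Lemma scaleRo (R : pzRingType) (r x : R) : (r *: (x : regularR R)) = r * x.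
Proof. by []. Qed.

Lemma reduced_of (R : pzRingType) : semisimple_ring R -> two_primal R ->
  forall x : R, x * x = 0 -> x = 0.
Proof.
move=> [I [L [Hs Hspan Hind]]] H2 x xx0.
have Nl : forall n a : R, nilpotentR n -> nilpotentR (a * n).
  move=> n a /H2 Hn; apply/H2 => P HP.
  by case: (HP) => [[_ _ Hm] _ _]; case: (Hm a n (Hn P HP)).
have Nr : forall n a : R, nilpotentR n -> nilpotentR (n * a).
  move=> n a /H2 Hn; apply/H2 => P HP.
  by case: (HP) => [[_ _ Hm] _ _]; case: (Hm a n (Hn P HP)).
pose T := fun y : R => forall n, nilpotentR n -> n * y = 0.
have HT : @is_submodule _ (regularR R) T.
  split.
  - by move=> n _; rewrite mulr0.
  - by move=> y1 y2 H1 H3 n Hn; rewrite mulrDr H1 // H3 // addr0.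
  - by move=> r y Hy n Hn; rewrite scaleRo mulrA Hy //; apply: Nr.
have HLT : psubset (fun y => exists i, L i y) T.
  move=> z [i Lz] n Hn.
  case: (Hs i) => [[L0 LD LZ] _ Hmin].
  case: (eqVneq (n * z) 0) => // nz0.
  pose L' := fun w : R => exists a, w = a * (n * z).
  have HL' : @is_submodule _ (regularR R) L'.
    split.
    - by exists 0; rewrite mul0r.
    - by move=> y1 y2 [a1 ->] [a2 ->]; exists (a1 + a2); rewrite mulrDl.
    - by move=> r y [a ->]; exists (r * a); rewrite scaleRo mulrA.
  have sub : psubset L' (L i).
    by move=> w [a ->]; have := LZ a _ (LZ n z Lz).
  case: (Hmin L' HL' sub) => [H0|H1].
    by move: nz0; rewrite (H0 (n * z)) ?eqxx //; exists 1; rewrite mul1r.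
  case: (H1 z Lz) => a za.
  have [k bk] : nilpotentR (a * n) by apply: Nl.
  have : forall j, z = (a * n) ^+ j * z.
    elim=> [|j IH]; first by rewrite expr0 mul1r.
    by rewrite exprSr -mulrA -mulrA -za.
  move/(_ k); rewrite bk mul0r => z0.
  by move: nz0; rewrite z0 mulr0 eqxx.
have T1 : T 1 := span_sub HT HLT (Hspan 1).
have := T1 x; rewrite mulr1; apply; exists 2%N; by rewrite expr2.
Qed.

Lemma duo_min (R : pzRingType) (L : pset R) :
  (forall x : R, x * x = 0 -> x = 0) -> simple_left_ideal L ->
  forall r z, L z -> exists t, r * z = t * r.
Proof.
move=> red [[L0 LD LZ] [x [Lx xn0]] Hmin].
have LM : forall a y, L y -> L (a * y) by move=> a y; apply: LZ.
have xx : x * x != 0 by apply/eqP => /red.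
pose L1 := fun w : R => exists y, L y /\ w = y * x.
have HL1 : @is_submodule _ (regularR R) L1.
  split.
  - by exists 0; rewrite mul0r.
  - by move=> y1 y2 [a1 [? ->]] [a2 [? ->]]; exists (a1 + a2); rewrite mulrDl; split => //; apply: LD.
  - by move=> r y [a [? ->]]; exists (r * a); rewrite scaleRo mulrA; split => //; apply: LM.
have [e [Le xe]] : exists e, L e /\ x = e * x.
  case: (Hmin L1 HL1) => [w [y [Ly ->]]|H0|H1].
  - by apply: LM.
  - by move: xx; rewrite (H0 (x * x)) ?eqxx //; exists x.
  by case: (H1 x Lx) => e [Le xe]; exists e.
pose A := fun w : R => L w /\ w * x = 0.
have HA : @is_submodule _ (regularR R) A.
  split.
  - by split => //; rewrite mul0r.
  - by move=> y1 y2 [? h1] [? h2]; split; [apply: LD| rewrite mulrDl h1 h2 addr0].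
  - by move=> r y [? h]; split; [apply: LM | rewrite scaleRo -mulrA h mulr0].
have Aw : forall w, L w -> w * x = 0 -> w = 0.
  case: (Hmin A HA) => [w [] //|H0|H1].
    by move=> w Lw wx; apply: H0.
  by move: xx; case: (H1 x Lx) => _ ->; rewrite eqxx.
have ee : e * e = e.
  apply/eqP; rewrite -subr_eq0; apply/eqP/Aw.
    apply: LD; first by apply: LM.
    by rewrite -mulN1r; apply: LM.
  by rewrite mulrBl -mulrA -xe -xe subrr.
have ce : forall y, e * y = y * e.
  move=> y.
  have h1 : (1 - e) * e = 0 by rewrite mulrBl mul1r ee subrr.
  have h2 : e * (1 - e) = 0 by rewrite mulrBr mulr1 ee subrr.
  have a0 : e * y * (1 - e) = 0.
    apply: red; rewrite !mulrA -(mulrA (e * y) (1 - e) e) h1 mulr0 !mul0r //.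
  have b0 : (1 - e) * y * e = 0.
    apply: red; rewrite !mulrA -(mulrA ((1 - e) * y) e (1 - e)) h2 mulr0 !mul0r //.
  move: a0 b0; rewrite mulrBr mulr1 mulrBl mulrBl mul1r => /eqP; rewrite subr_eq0 => /eqP ->.
  by move/eqP; rewrite subr_eq0 => /eqP ->; rewrite -[RHS]mulrA ee.
have en0 : e != 0 by apply/eqP => e0; apply: xn0; rewrite xe e0 mul0r.
pose L2 := fun w : R => exists t, w = t * e.
have HL2 : @is_submodule _ (regularR R) L2.
  split.
  - by exists 0; rewrite mul0r.
  - by move=> y1 y2 [a1 ->] [a2 ->]; exists (a1 + a2); rewrite mulrDl.
  - by move=> r y [a ->]; exists (r * a); rewrite scaleRo mulrA.
have zeq : forall z, L z -> z * e = z.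
  case: (Hmin L2 HL2) => [w [t ->]|H0|H1].
  - by apply: LM.
  - by move: en0; rewrite (H0 e) ?eqxx //; exists 1; rewrite mul1r.
  by move=> z /H1 [t ->]; rewrite -mulrA ee.
move=> r z Lz.
case: (eqVneq (r * e) 0) => re0.
  by exists 0; rewrite mul0r -(zeq z Lz) -ce mulrA re0 mul0r.
pose L3 := fun w : R => exists t, w = t * (r * e).
have HL3 : @is_submodule _ (regularR R) L3.
  split.
  - by exists 0; rewrite mul0r.
  - by move=> y1 y2 [a1 ->] [a2 ->]; exists (a1 + a2); rewrite mulrDl.
  - by move=> r' y [a ->]; exists (r' * a); rewrite scaleRo mulrA.
case: (Hmin L3 HL3) => [w [t ->]|H0|H1].
- exact: (LM _ _ (LM _ _ Le)).
- by move: re0; rewrite (H0 (r * e)) ?eqxx //; exists 1; rewrite mul1r.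
case: (H1 (r * z) (LM r z Lz)) => t ->.
by exists (t * e); rewrite -ce !mulrA.
Qed.

Lemma duo_of (R : pzRingType) : semisimple_ring R ->
  (forall x : R, x * x = 0 -> x = 0) -> forall r y : R, exists t, r * y = t * r.
Proof.
move=> [I [L [Hs Hspan _]]] red.
pose T := fun y : R => forall a r, exists t, r * (a * y) = t * r.
have HT : @is_submodule _ (regularR R) T.
  split.
  - by move=> a r; exists 0; rewrite !mulr0 mul0r.
  - move=> y1 y2 H1 H3 a r; case: (H1 a r) => t1 e1; case: (H3 a r) => t2 e2.
    by exists (t1 + t2); rewrite mulrDr mulrDr e1 e2 mulrDl.
  - by move=> b y Hy a r; rewrite scaleRo [a * _]mulrA; apply: Hy.
have HLT : psubset (fun y => exists i, L i y) T.
  move=> z [i Lz] a r; apply: (duo_min red (Hs i)).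
  by case: (Hs i) => [[_ _ LZ] _ _]; apply: LZ.
move=> r y; case: (span_sub HT HLT (Hspan 1) y r) => t; rewrite mulr1 => ->.
by exists t.
Qed.

Lemma prime_iff (R : pzRingType) (M : lmodType R) :
  (forall r y : R, exists t, r * y = t * r) ->
  forall P : pset M, prime_submodule P <-> completely_prime_submodule P.
Proof.
move=> duo P; split.
  case=> HP Hfull Hpr; split => // r m Prm.
  pose A := fun w : R => exists a, w = a * r.
  pose K := fun w : M => exists y, w = y *: m.
  have HA : is_ideal A.
    split.
    - by exists 0; rewrite mul0r.
    - by move=> y1 y2 [a1 ->] [a2 ->]; exists (a1 + a2); rewrite mulrDl.
    - move=> r' w [a ->]; split; first by exists (r' * a); rewrite mulrA.
      by case: (duo r r') => t e; exists (a * t); rewrite -mulrA e mulrA.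
  have HK : is_submodule K.
    split.
    - by exists 0; rewrite scale0r.
    - by move=> y1 y2 [a1 ->] [a2 ->]; exists (a1 + a2); rewrite scalerDl.
    - by move=> r' w [a ->]; exists (r' * a); rewrite scalerA.
  case: (HP) => P0 PD PZ.
  case: (Hpr A K HA HK).
  - apply: span_sub => // w [a [k [[b ->] [y ->] ->]]].
    case: (duo r y) => t e.
    by rewrite scalerA -mulrA e mulrA -scalerA; apply: PZ.
  - by move=> H; left; have := H m; rewrite /K; apply; exists 1; rewrite scale1r.
  - by move=> H; right => w [m' ->]; apply: H; apply: span_gen; exists r, m'; split => //; exists 1; rewrite mul1r.
case=> HP Hfull Hcp; split => // A K HA HK HAK.
case: (classic (psubset K P)) => [|nKP]; [by left|right].
have [k [Kk nPk]] : exists k, K k /\ ~ P k.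
  apply: NNPP => hn; apply: nKP => k Kk; apply: NNPP => nPk; apply: hn; by exists k.
case: (HP) => P0 PD PZ.
apply: span_sub => // w [a [m' [Aa _ ->]]].
case: (Hcp a k).
- by apply: HAK; apply: span_gen; exists a, k.
- by [].
- by move=> H; apply: H; exists m'.
Qed.

Theorem proposition4p25 (R : pzRingType) :
  semisimple_ring R -> two_primal R ->
  (complete_radical_formula R <-> radical_formula R).
Proof.
move=> Hss H2.
have red := reduced_of Hss H2.
have duo := duo_of Hss red.
have Hb : forall (M : lmodType R) (N : pset M), beta_s N = beta_s_co N.
  move=> M N; rewrite /beta_s /beta_s_co.
  have -> : @prime_submodule R M = @completely_prime_submodule R M.
    by apply: functional_extensionality => P; apply: propositional_extensionality; apply: prime_iff.
  by [].
split=> H M N HN; [rewrite Hb | rewrite -Hb]; exact: H.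
Qed.
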